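(* For all positive rationals $p<q<1$, $p\text{-}\mathsf{WWKL}\nleq_{\mathrm{W}} q\text{-}\mathsf{WWKL}$.
   Context: For a positive rational $q<1$, $q\text{-}\mathsf{WWKL}$ is the problem whose instances are subtrees $T$ of $2^{<\omega}$ with $|\{\sigma\in 2^n:\sigma\in T\}|/2^n\geq q$ for all $n$, and whose solutions are the infinite paths through $T$. $\mathsf{P}\leq_{\mathrm{W}}\mathsf{Q}$ means there are Turing functionals $\Phi,\Psi$ such that for every instance $A$ of $\mathsf{P}$, $\Phi(A)$ is an instance of $\mathsf{Q}$, and for every solution $T$ to $\Phi(A)$, $\Psi(A\oplus T)$ is a solution to $A$. *)

(* Defs.v *)
From HB Require Import structures.
From mathcomp Require Import all_boot all_order all_algebra.
Set Implicit Arguments. Unset Strict Implicit. Unset Printing Implicit Defensive.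
Import Order.TTheory GRing.Theory Num.Theory.

Inductive pcode : Type :=
| PZero
| PSucc
| PProj (i : nat)
| POracle
| PComp (f : pcode) (gs : seq pcode)
| PPrec (f g : pcode)
| PMin (f : pcode).

Inductive peval (X : nat -> nat) : pcode -> seq nat -> nat -> Prop :=
| ev_zero args : peval X PZero args 0
| ev_succ args : peval X PSucc args (head 0 args).+1
| ev_proj i args : peval X (PProj i) args (nth 0 args i)
| ev_oracle args : peval X POracle args (X (head 0 args))
| ev_comp f gs args ys y :
    pevals X gs args ys -> peval X f ys y -> peval X (PComp f gs) args y
| ev_prec0 f g args y :
    peval X f args y -> peval X (PPrec f g) (0 :: args) y
| ev_precS f g n args y z :
    peval X (PPrec f g) (n :: args) y -> peval X g (n :: y :: args) z ->
    peval X (PPrec f g) (n.+1 :: args) z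
| ev_min f args n :
    peval X f (n :: args) 0 ->
    (forall m, m < n -> exists k, peval X f (m :: args) k.+1) ->
    peval X (PMin f) args n
with pevals (X : nat -> nat) : seq pcode -> seq nat -> seq nat -> Prop :=
| evs_nil args : pevals X [::] args [::]
| evs_cons g gs args y ys :
    peval X g args y -> pevals X gs args ys -> pevals X (g :: gs) args (y :: ys).

(* Sets of naturals / elements of 2^omega are functions nat -> bool. *)
Definition oracle (A : nat -> bool) : nat -> nat := fun n => nat_of_bool (A n).

Definition join (A B : nat -> bool) : nat -> nat :=
  fun n => if odd n then nat_of_bool (B n./2) else nat_of_bool (A n./2).

Definition computes (Phi : pcode) (X : nat -> nat) (S : nat -> bool) : Prop :=
  forall n, peval X Phi [:: n] (nat_of_bool (S n)).

(* bijective coding of finite binary strings (first bit = head) by naturals *)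
Fixpoint scode (s : seq bool) : nat :=
  match s with
  | [::] => 0
  | b :: s' => ((scode s').*2 + nat_of_bool b).+1
  end.

Definition is_tree (T : nat -> bool) : Prop :=
  forall s t : seq bool, T (scode (s ++ t)) -> T (scode s).

Fixpoint strings (n : nat) : seq (seq bool) :=
  if n is n'.+1 then [seq b :: s | b <- [:: false; true], s <- strings n']
  else [:: [::]].

Definition level_count (T : nat -> bool) (n : nat) : nat :=
  count (fun s => T (scode s)) (strings n).

Definition wwkl_inst (q : rat) (T : nat -> bool) : Prop :=
  is_tree T /\
  forall n : nat, (q <= (level_count T n)%:R / ((2 ^ n)%N)%:R)%R.

Definition wwkl_sol (T : nat -> bool) (X : nat -> bool) : Prop :=
  forall n : nat, T (scode (mkseq X n)).

Definition weihrauch_le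
  (IP : (nat -> bool) -> Prop) (SP : (nat -> bool) -> (nat -> bool) -> Prop)
  (IQ : (nat -> bool) -> Prop) (SQ : (nat -> bool) -> (nat -> bool) -> Prop) : Prop :=
  exists Phi Psi : pcode,
    forall A, IP A ->
      exists B, computes Phi (oracle A) B /\ IQ B /\
        forall T, SQ B T ->
          exists X, computes Psi (join A T) X /\ SP A X.

(* Main.v *)
Require Import Defs.
From HB Require Import structures.
From mathcomp Require Import all_boot all_order all_algebra.
From mathcomp Require Import zify lra.
From Stdlib Require Import ClassicalEpsilon.
Import Order.TTheory GRing.Theory Num.Theory.
Set Implicit Arguments. Unset Strict Implicit.

Section Ind.
Variable X : nat -> nat.
Variable P : pcode -> seq nat -> nat -> Prop.
Variable Q : seq pcode -> seq nat -> seq nat -> Prop.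
Hypothesis Hzero : forall args, P PZero args 0.
Hypothesis Hsucc : forall args, P PSucc args (head 0 args).+1.
Hypothesis Hproj : forall i args, P (PProj i) args (nth 0 args i).
Hypothesis Horacle : forall args, P POracle args (X (head 0 args)).
Hypothesis Hcomp : forall f gs args ys y, pevals X gs args ys -> Q gs args ys ->
  peval X f ys y -> P f ys y -> P (PComp f gs) args y.
Hypothesis Hprec0 : forall f g args y, peval X f args y -> P f args y -> P (PPrec f g) (0 :: args) y.
Hypothesis HprecS : forall f g n args y z,
    peval X (PPrec f g) (n :: args) y -> P (PPrec f g) (n :: args) y ->
    peval X g (n :: y :: args) z -> P g (n :: y :: args) z ->
    P (PPrec f g) (n.+1 :: args) z.
Hypothesis Hmin : forall f args n,
    peval X f (n :: args) 0 -> P f (n :: args) 0 ->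
    (forall m, m < n -> exists k, peval X f (m :: args) k.+1 /\ P f (m :: args) k.+1) ->
    P (PMin f) args n.
Hypothesis Hnil : forall args, Q [::] args [::].
Hypothesis Hcons : forall g gs args y ys, peval X g args y -> P g args y ->
  pevals X gs args ys -> Q gs args ys -> Q (g :: gs) args (y :: ys).

Fixpoint peval_ind2 c a y (H : peval X c a y) {struct H} : P c a y :=
  match H in peval _ c a y return P c a y with
  | ev_zero args => Hzero args
  | ev_succ args => Hsucc args
  | ev_proj i args => Hproj i args
  | ev_oracle args => Horacle args
  | ev_comp f gs args ys y Hs Hf =>
      Hcomp Hs (pevals_ind2 Hs) Hf (peval_ind2 Hf)
  | ev_prec0 f g args y Hf => Hprec0 g Hf (peval_ind2 Hf)
  | ev_precS f g n args y z H1 H2 => HprecS H1 (peval_ind2 H1) H2 (peval_ind2 H2)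
  | ev_min f args n H0 Hlt => Hmin H0 (peval_ind2 H0)
      (fun m Hm => match Hlt m Hm with ex_intro k Hk => ex_intro _ k (conj Hk (peval_ind2 Hk)) end)
  end
with pevals_ind2 gs a ys (H : pevals X gs a ys) {struct H} : Q gs a ys :=
  match H in pevals _ gs a ys return Q gs a ys with
  | evs_nil args => Hnil args
  | evs_cons g gs args y ys Hg Hgs => Hcons Hg (peval_ind2 Hg) Hgs (pevals_ind2 Hgs)
  end.
End Ind.

Lemma peval_det X c a y : peval X c a y -> forall y', peval X c a y' -> y = y'.
Proof.
move=> H.
apply: (@peval_ind2 X (fun c a y => forall y', peval X c a y' -> y = y')
  (fun gs a ys => forall ys', pevals X gs a ys' -> ys = ys')) H.
- by move=> args y' H; inversion H.
- by move=> args y' H; inversion H.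
- by move=> i args y' H; inversion H.
- by move=> args y' H; inversion H.
- move=> f gs args ys0 y0 _ IHs _ IHf y' H; inversion H; subst.
  match goal with Hh : pevals _ _ _ _ |- _ => have E := IHs _ Hh end; subst.
  by apply: IHf.
- move=> f g args y0 _ IH y' H; inversion H; subst. exact: IH.
- move=> f g n args y0 z _ IH1 _ IH2 y' H; inversion H; subst.
  match goal with Hh : peval _ (PPrec _ _) _ _ |- _ => have E := IH1 _ Hh end; subst.
  by apply: IH2.
- move=> f args n _ IH0 Hlt y' H; inversion H; subst.
  rename H1 into Ha; rename H2 into Hb.
  case: (ltngtP n y') => // [lt|gt].
  + have [k Hk] := Hb _ lt; by have := IH0 _ Hk.
  + have [k [Hk IHk]] := Hlt _ gt; by have := IHk _ Ha.
- by move=> args ys' H; inversion H.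
- move=> g gs args y0 ys0 _ IHg _ IHs ys' H; inversion H; subst.
  match goal with H3 : peval _ _ _ _, H5 : pevals _ _ _ _ |- _ =>
  by rewrite (IHg _ H3) (IHs _ H5) end.
Qed.

Definition agree (X Y : nat -> nat) N := forall k, k < N -> X k = Y k.

Lemma agree_mono X Y N M : M <= N -> agree X Y N -> agree X Y M.
Proof. by move=> le H k lt; apply: H; apply: leq_trans le. Qed.

Lemma combine (P : nat -> nat -> Prop) n :
  (forall i N M, N <= M -> P i N -> P i M) ->
  (forall i, i < n -> exists N, P i N) -> exists N, forall i, i < n -> P i N.
Proof.
move=> mono; elim: n => [|n IH] H; first by exists 0.
have [N1 H1] := IH (fun i lt => H i (ltnW lt)).
have [N2 H2] := H n (ltnSn n).
exists (maxn N1 N2) => i; rewrite ltnS leq_eqVlt; case/orP => [/eqP->|lt].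
- by apply: mono H2; rewrite leq_maxr.
- by apply: mono (H1 i lt); rewrite leq_maxl.
Qed.

Lemma peval_use X c a y : peval X c a y ->
  exists N, forall Y, agree Y X N -> peval Y c a y.
Proof.
move=> H.
apply: (@peval_ind2 X (fun c a y => exists N, forall Y, agree Y X N -> peval Y c a y)
  (fun gs a ys => exists N, forall Y, agree Y X N -> pevals Y gs a ys)) H.
- by move=> args; exists 0 => Y _; constructor.
- by move=> args; exists 0 => Y _; constructor.
- by move=> i args; exists 0 => Y _; constructor.
- move=> args; exists (head 0 args).+1 => Y HY.
  rewrite -HY //; constructor.
- move=> f gs args ys0 y0 _ [N1 H1] _ [N2 H2]; exists (maxn N1 N2) => Y HY.
  econstructor; [apply: H1 | apply: H2]; apply: agree_mono HY;
    by rewrite ?leq_maxl ?leq_maxr.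
- move=> f g args y0 _ [N1 H1]; exists N1 => Y HY; constructor; exact: H1.
- move=> f g n args y0 z _ [N1 H1] _ [N2 H2]; exists (maxn N1 N2) => Y HY.
  econstructor; [apply: H1 | apply: H2]; apply: agree_mono HY;
    by rewrite ?leq_maxl ?leq_maxr.
- move=> f args n _ [N1 H1] Hlt.
  have [N2 H2] := @combine (fun m N => exists k, forall Y, agree Y X N -> peval Y f (m :: args) k.+1) n
     (fun i N M le '(ex_intro k Hk) => ex_intro _ k (fun Y HY => Hk Y (agree_mono le HY)))
     (fun m lt => match Hlt m lt with ex_intro k (conj _ (ex_intro N HN)) =>
        ex_intro _ N (ex_intro _ k HN) end).
  exists (maxn N1 N2) => Y HY; constructor.
  + by apply: H1; apply: agree_mono HY; rewrite leq_maxl.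
  + move=> m lt; have [k Hk] := H2 m lt; exists k; apply: Hk.
    by apply: agree_mono HY; rewrite leq_maxr.
- by move=> args; exists 0 => Y _; constructor.
- move=> g gs args y0 ys0 _ [N1 H1] _ [N2 H2]; exists (maxn N1 N2) => Y HY.
  constructor; [apply: H1 | apply: H2]; apply: agree_mono HY;
    by rewrite ?leq_maxl ?leq_maxr.
Qed.

Lemma strings_S n : strings n.+1 = map (cons false) (strings n) ++ map (cons true) (strings n).
Proof. by rewrite /= cats0. Qed.

Lemma size_strings n : size (strings n) = 2 ^ n.
Proof. by elim: n => // n IH; rewrite strings_S size_cat !size_map IH expnS mul2n addnn. Qed.

Lemma mem_strings n s : (s \in strings n) = (size s == n).
Proof.
elim: n s => [|n IH] s; first by case: s.
rewrite strings_S mem_cat; case: s => [|b s].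
- by apply/negbTE/negP => /orP[] /mapP[x _].
- have inj (b' : bool) : injective (cons b') by move=> x y [].
  case: b; rewrite (mem_map (inj _)) IH /= eqSS.
  + by apply/orP/idP => [[/mapP[x _ //]|//]|->]; right.
  + by apply/orP/idP => [[//|/mapP[x _ //]]|->]; left.
Qed.

Lemma uniq_strings n : uniq (strings n).
Proof.
elim: n => // n IH; rewrite strings_S cat_uniq !map_inj_uniq //;
  try by move=> x y [].
rewrite IH /= andbT; apply/hasPn => x /mapP[y _ ->]; apply/negP => /mapP[z _ //].
Qed.

Lemma count_take (P : pred (seq bool)) L n : L <= n ->
  count (fun r => P (take L r)) (strings n) = count P (strings L) * 2 ^ (n - L).
Proof.
elim: L n P => [|L IH] n P le.
- rewrite subn0 /=; under eq_count do rewrite take0.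
  case: (P [::]).
  + by rewrite count_predT size_strings mul1n.
  + by rewrite count_pred0 mul0n.
- case: n le => // n le; rewrite !strings_S !count_cat !count_map.
  rewrite subSS mulnDl -!IH //.
Qed.

Lemma count_ext (C : pred (seq bool)) m N :
  count C (strings (m + N)) <= 2 ^ N * count (fun s => has (fun t => C (s ++ t)) (strings N)) (strings m).
Proof.
elim: m C => [|m IH] C.
- rewrite add0n /= addn0.
  case: (boolP (has _ _)) => [_|H].
  + by rewrite muln1 -size_strings count_size.
  + by rewrite muln0 leqn0 -leqn0 leqNgt -has_count.
- rewrite addSn !strings_S !count_cat !count_map mulnDr.
  apply: leq_add; [exact: (IH (fun s => C (false :: s))) | exact: (IH (fun s => C (true :: s)))].
Qed.

Lemma scode_inj : injective scode.
Proof.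
elim=> [|b s IH] [|b' s'] //= [] E.
have := congr1 odd E; rewrite !oddD !odd_double /= => Eb.
have Eb' : b = b' by case: b b' Eb {E} => [] [].
subst b'; congr (_ :: _); apply: IH.
move: E; rewrite -!addnn; lia.
Qed.

Lemma size_scode s : size s <= scode s.
Proof. elim: s => //= b s IH; rewrite ltnS -addnn; lia. Qed.

Lemma scode_ltS s : (scode s).+1 < 2 ^ (size s).+1.
Proof. elim: s => //= b s IH; rewrite expnS; case: b => /=; rewrite -addnn; lia. Qed.

Lemma scode_lt s : scode s < 2 ^ (size s).+1.
Proof. exact: ltn_trans (ltnSn _) (scode_ltS s). Qed.

Definition ext_in (C : seq bool -> Prop) (s : seq bool) :=
  forall n, exists t, size t = n /\ C (s ++ t).
Definition prefix_closed (C : seq bool -> Prop) := forall s t, C (s ++ t) -> C s.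

Lemma ext_in_self C s : ext_in C s -> C s.
Proof. by move=> /(_ 0) [t [/size0nil -> H]]; rewrite cats0 in H. Qed.

Lemma ext_in_prefix C : prefix_closed C -> prefix_closed (ext_in C).
Proof.
move=> pc s t H n.
case: (leqP n (size t)) => le.
- exists (take n t); split; first by rewrite size_takel; lia.
  apply: (pc _ (drop n t)); rewrite -catA cat_take_drop.
  exact: ext_in_self.
- have [u [su Hu]] := H (n - size t); exists (t ++ u); split.
  + rewrite size_cat su; lia.
  + by rewrite catA.
Qed.

Section Konig.
Variable C : seq bool -> Prop.
Hypothesis pc : prefix_closed C.

Definition knext (s : seq bool) : seq bool :=
  if excluded_middle_informative (ext_in C (rcons s false)) then rcons s false else rcons s true.

Lemma knext_ext s : ext_in C s -> ext_in C (knext s).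
Proof.
move=> H; rewrite /knext; case: excluded_middle_informative => // Hf /=.
apply: NNPP => Ht.
have [n1 H1] := not_all_ex_not _ _ Hf.
have [n2 H2] := not_all_ex_not _ _ Ht.
have [u [su Hu]] := H (maxn n1 n2).+1.
case: u su Hu => // b u [su] Hu.
have Hb : C (rcons s b ++ u) by rewrite -cats1 -catA.
move: Hb; clear Hu; case: b => Hb.
- apply: H2; exists (take n2 u); split; first by rewrite size_takel; lia.
  apply: (@pc _ (drop n2 u)); by rewrite -catA cat_take_drop.
- apply: H1; exists (take n1 u); split; first by rewrite size_takel; lia.
  apply: (@pc _ (drop n1 u)); by rewrite -catA cat_take_drop.
Qed.

Lemma size_knext s : size (knext s) = (size s).+1.
Proof. by rewrite /knext; destruct excluded_middle_informative; rewrite size_rcons. Qed.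

Lemma nth_knext s k : k < size s -> nth false (knext s) k = nth false s k.
Proof. by move=> lt; rewrite /knext; destruct excluded_middle_informative; rewrite nth_rcons lt. Qed.

Lemma konig s : ext_in C s ->
  exists T : nat -> bool, (forall n, C (mkseq T n)) /\ (forall k, k < size s -> T k = nth false s k).
Proof.
move=> Hs.
pose sg n := iter n knext s.
have size_sg n : size (sg n) = size s + n.
  by elim: n => [|n IH]; rewrite ?addn0 //= size_knext IH addnS.
have ext_sg n : ext_in C (sg n) by elim: n => //= n IH; apply: knext_ext.
have nth_sg j i k : k < size (sg j) -> nth false (sg (i + j)) k = nth false (sg j) k.
  move=> lt; elim: i => // i IH; rewrite addSn /= nth_knext ?IH //.
  by rewrite size_sg; move: lt; rewrite size_sg; lia.
pose T k := nth false (sg k.+1) k.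
have TE j k : k < size (sg j) -> T k = nth false (sg j) k.
  move=> lt; rewrite /T.
  have lt' : k < size (sg k.+1) by rewrite size_sg; lia.
  rewrite -(nth_sg j (k.+1) k lt) -(nth_sg k.+1 j k lt') addnC //.
exists T; split.
- move=> n; apply: (@pc _ (drop n (sg n))).
  have -> : mkseq T n = take n (sg n).
    apply: (@eq_from_nth _ false).
    + by rewrite size_mkseq size_takel // size_sg leq_addl.
    + move=> i; rewrite size_mkseq => lt.
      rewrite nth_mkseq // nth_take // (TE n) // size_sg; lia.
  rewrite cat_take_drop; exact: ext_in_self.
- by move=> k lt; rewrite (TE 0).
Qed.
End Konig.

Definition CP (C : nat -> bool) : seq bool -> Prop := fun r => C (scode r).
Definition Dn (C : nat -> bool) (s : seq bool) (N : nat) : bool :=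
  has (fun t => C (scode (s ++ t))) (strings N).

Lemma CP_pc (C : nat -> bool) : is_tree C -> prefix_closed (CP C).
Proof. by move=> tC s t; apply: tC. Qed.

Lemma DnP (C : nat -> bool) s N : reflect (exists t, size t = N /\ C (scode (s ++ t))) (Dn C s N).
Proof.
apply: (iffP hasP) => [[t]|[t [st Ht]]].
- by rewrite mem_strings => /eqP st Ht; exists t.
- by exists t; rewrite ?mem_strings ?st.
Qed.

Lemma ext_Dn (C : nat -> bool) s N : ext_in (CP C) s -> Dn C s N.
Proof. by move=> /(_ N) [t [st Ht]]; apply/DnP; exists t. Qed.

Lemma Dn_mono (C : nat -> bool) s N M : is_tree C -> N <= M -> Dn C s M -> Dn C s N.
Proof.
move=> tC le /DnP [t [st Ht]]; apply/DnP; exists (take N t); split.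
- by rewrite size_takel // st.
- apply: (tC _ (drop N t)); by rewrite -catA cat_take_drop.
Qed.

Lemma stab (C : nat -> bool) (l : seq (seq bool)) : is_tree C ->
  exists N, forall s, s \in l -> Dn C s N -> ext_in (CP C) s.
Proof.
move=> tC; elim: l => [|s l [N1 IH]]; first by exists 0.
case: (classic (ext_in (CP C) s)) => Hs.
- exists N1 => s'; rewrite inE; case/orP => [/eqP -> //|]; exact: IH.
- have [n Hn] := not_all_ex_not _ _ Hs.
  exists (maxn N1 n) => s'; rewrite inE; case/orP => [/eqP ->|in_l] HD.
  + exfalso; apply: Hn; apply/DnP; apply: Dn_mono HD => //; exact: leq_maxr.
  + by apply: IH => //; apply: Dn_mono HD => //; exact: leq_maxl.
Qed.

Local Open Scope ring_scope.

Lemma count_lb (q : rat) (C : nat -> bool) m N : wwkl_inst q C ->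
  q * (2 ^ m)%:R <= (count (fun s => Dn C s N) (strings m))%:R.
Proof.
move=> [tC Hq].
have h1 := Hq (m + N)%N; rewrite ler_pdivlMr ?ltr0n ?expn_gt0 // in h1.
have h2 := count_ext (fun r => C (scode r)) m N.
rewrite /level_count in h1.
have h3 : q * (2 ^ (m + N))%:R <= (2 ^ N * count (fun s => Dn C s N) (strings m))%:R.
  apply: le_trans h1 _; rewrite ler_nat; exact: h2.
rewrite expnD !natrM mulrA [X in _ <= X]mulrC in h3.
by rewrite -(ler_pM2r (x := (2 ^ N)%:R)) ?ltr0n ?expn_gt0.
Qed.

Local Close Scope ring_scope.

Lemma removal (T : eqType) (mass : T -> nat) (U : seq T) K : uniq U -> K <= size U ->
  exists S, [/\ uniq S, {subset S <= U}, size S = K &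
    (\sum_(x <- S) mass x) * size U <= K * \sum_(x <- U) mass x].
Proof.
move=> uU le; move: (subnK le) => E; move: (size U - K) E => d.
elim: d U uU {le} => [|d IH] U uU E.
- exists U; split => //; by rewrite -E add0n mulnC.
- have [x xU xmax] : exists2 x, x \in U & forall y, y \in U -> mass y <= mass x.
    case: U uU E => // a U' _ _.
    elim: U' a => [|b U' IHU] a; first by exists a; [rewrite inE | move=> y; rewrite inE => /eqP ->].
    case: (leqP (mass a) (mass b)) => ab.
    + have [x xin xm] := IHU b; exists x; first by rewrite inE xin orbT.
      move=> y; rewrite inE; case/orP => [/eqP ->|]; last exact: xm.
      by apply: leq_trans ab (xm _ _); rewrite inE eqxx.
    + have [x xin xm] := IHU a; exists x.
      * by move: xin; rewrite !inE; case/orP => ->; rewrite ?orbT.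
      * move=> y; rewrite !inE; case/orP => [/eqP ->|]; first by apply: xm; rewrite inE eqxx.
        case/orP => [/eqP ->|yin]; last by apply: xm; rewrite inE yin orbT.
        by apply: leq_trans (ltnW ab) (xm _ _); rewrite inE eqxx.
  have uU' : uniq (rem x U) by exact: rem_uniq.
  have sU' : size (rem x U) = d + K by rewrite size_rem // -E addSn.
  have [S [uS sub sS HS]] := IH _ uU' (esym sU').
  exists S; split => //.
  + by move=> y /sub; apply: mem_rem.
  + rewrite (big_rem x xU) /= -E addSn.
    have aK : \sum_(y <- S) mass y <= K * mass x.
      rewrite -sS; elim: (S) sub => [|z S' IHS] sub'; first by rewrite big_nil.
      rewrite big_cons /= mulSn; apply: leq_add.
      * by apply: xmax; apply: (mem_rem (x:=x)); apply: sub'; rewrite inE eqxx.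
      * by apply: IHS => y yS; apply: sub'; rewrite inE yS orbT.
    move: HS; rewrite sU' => HS.
    nia.
Qed.

Lemma count_in_cons (f : seq bool -> seq bool) x S D : x \notin S ->
  count (fun s => f s \in x :: S) D = count (fun s => f s == x) D + count (fun s => f s \in S) D.
Proof.
move=> xS; elim: D => //= s D ->; rewrite inE.
case: eqP => [->|_] /=; last by rewrite add0n addnCA.
by rewrite (negbTE xS) add0n addnA add1n.
Qed.

Lemma sum_mass (f : seq bool -> seq bool) S D : uniq S ->
  \sum_(x <- S) count (fun s => f s == x) D = count (fun s => f s \in S) D.
Proof.
elim: S => [|x S IH] /=; first by rewrite big_nil; elim: D.
by case/andP => xS uS; rewrite big_cons IH // count_in_cons.
Qed.

Definition Acut (h L : nat) (S : seq (seq bool)) : nat -> bool := fun k =>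
  if excluded_middle_informative (exists r, scode r = k /\ h < size r /\ take L r \notin S)
  then false else true.

Section Acut.
Variables (h L : nat) (S : seq (seq bool)).

Lemma Acut_code r : Acut h L S (scode r) = ~~ ((h < size r) && (take L r \notin S)).
Proof.
rewrite /Acut; destruct excluded_middle_informative as [[r' [E [H1 H2]]]|H] => /=.
- by move/scode_inj: E => <-; rewrite H1 H2.
- case: (boolP ((h < size r) && (take L r \notin S))) => // /andP[H1 H2].
  by exfalso; apply: H; exists r.
Qed.

Lemma Acut_small k : k <= h -> Acut h L S k = true.
Proof.
move=> le; rewrite /Acut; destruct excluded_middle_informative as [e|] => //=.
exfalso; case: e => r [E [H1 _]].
by have := size_scode r; rewrite E; lia.
Qed.

Hypothesis Lh : L <= h.

Lemma Acut_tree : is_tree (Acut h L S).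
Proof.
move=> s t; rewrite !Acut_code size_cat; apply: contra => /andP[H1 H2].
rewrite takel_cat ?H2 ?andbT; lia.
Qed.

Lemma count_memS : uniq S -> {subset S <= strings L} -> count (mem S) (strings L) = size S.
Proof.
move=> uS sub; rewrite -size_filter; apply: perm_size; apply: uniq_perm.
- by apply: filter_uniq; apply: uniq_strings.
- exact: uS.
- move=> x; rewrite mem_filter; apply/andP/idP => [[]//|xS]; split => //; exact: sub.
Qed.

Lemma Acut_level n : uniq S -> {subset S <= strings L} ->
  level_count (Acut h L S) n = if n <= h then 2 ^ n else size S * 2 ^ (n - L).
Proof.
move=> uS sub; rewrite /level_count; case: leqP => le.
- rewrite -size_strings -count_predT; apply: eq_in_count => r.
  by rewrite mem_strings Acut_code => /eqP ->; rewrite ltnNge le.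
- rewrite -count_memS // -count_take; last by lia.
  apply: eq_in_count => r; rewrite mem_strings Acut_code => /eqP ->.
  by rewrite le /= negbK.
Qed.
End Acut.

Lemma nb_inj (a b : bool) : nat_of_bool a = nat_of_bool b -> a = b.
Proof. by case: a; case: b. Qed.

Lemma join_agree (A A' T T' : nat -> bool) n :
  (forall k, k < n -> A k = A' k) -> (forall k, k < n -> T k = T' k) ->
  agree (join A T) (join A' T') (2 * n).
Proof.
move=> HA HT k lt; have lt' : k./2 < n by rewrite ltn_half_double -mul2n.
by rewrite /join (HA _ lt') (HT _ lt').
Qed.

Lemma count_sub_in (T : eqType) (a b : pred T) (l : seq T) :
  (forall x, x \in l -> a x -> b x) -> count a l <= count b l.
Proof.
elim: l => //= x l IH H; apply: leq_add.
- case: (boolP (a x)) => // ax; by rewrite (H x (mem_head _ _) ax).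
- by apply: IH => y yl; apply: H; rewrite inE yl orbT.
Qed.

Lemma take_mkseq (f : nat -> bool) i n : i <= n -> take i (mkseq f n) = mkseq f i.
Proof.
move=> le; apply: (@eq_from_nth _ false).
- by rewrite size_takel ?size_mkseq.
- move=> j; rewrite size_takel ?size_mkseq // => lt.
  rewrite nth_take // !nth_mkseq //; lia.
Qed.

Definition good (Psi : pcode) (L : nat) (s w : seq bool) :=
  forall i, i < L -> forall Y, agree Y (join (fun _ => true) (fun k => nth false s k)) (2 * size s) ->
    peval Y Psi [:: i] (nth false w i).

Lemma good_mono Psi L s t w : good Psi L s w -> good Psi L (s ++ t) w.
Proof.
move=> H i lt Y HY; apply: H => // k lk; rewrite HY; last first.
  by rewrite size_cat; lia.
have lk' : k./2 < size s by rewrite ltn_half_double -mul2n.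
by rewrite /join nth_cat lk'.
Qed.

Local Open Scope ring_scope.

Theorem proposition4p6 (p q : rat) :
  0 < p -> p < q -> q < 1 ->
  ~ weihrauch_le (wwkl_inst p) wwkl_sol (wwkl_inst q) wwkl_sol.
Proof.
move=> p0 pq q1 [Phi [Psi H]].
have [L HL] : exists L : nat, 1 < (2 ^ L)%:R * (q - p).
  exists (Num.bound (q - p)^-1).
  have qp0 : 0 < q - p by rewrite subr_gt0.
  have qi : 0 <= (q - p)^-1 by rewrite invr_ge0 ltW.
  have h1 := archi_boundP qi.
  have h2 : (Num.bound (q - p)^-1)%:R <= (2 ^ Num.bound (q - p)^-1)%:R :> rat.
    by rewrite ler_nat ltnW // ltn_expl.
  rewrite -ltr_pdivrMr // div1r; exact: lt_le_trans h1 h2.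
pose K := (Num.truncn (p * (2 ^ L)%:R)).+1.
have pK : p * (2 ^ L)%:R < K%:R by rewrite /K; exact: truncnS_gt.
have Kq : K%:R < q * (2 ^ L)%:R.
  have t1 : (Num.truncn (p * (2 ^ L)%:R))%:R <= p * (2 ^ L)%:R.
    by rewrite truncn_le mulr_ge0 ?ler0n ?ltW.
  rewrite /K -addn1 natrD; lra.
have KL : (K <= 2 ^ L)%N.
  rewrite -(ler_nat rat); apply: ltW; apply: lt_le_trans Kq _.
  rewrite ler_piMl ?ltW //; by rewrite ltr0n expn_gt0.
pose Afull : nat -> bool := fun _ => true.
have HAfull : wwkl_inst p Afull.
  split; first by [].
  move=> n; rewrite /level_count count_predT size_strings divff.
  - exact: ltW (lt_trans pq q1).
  - by rewrite pnatr_eq0 -lt0n expn_gt0.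
have [B0 [Hphi0 [HB0 Hsol0]]] := H Afull HAfull.
have tB0 : is_tree B0 by case: HB0.
have [m0 Hm0] : exists m0 : nat, forall s, size s = m0 -> ext_in (CP B0) s ->
    exists w, size w = L /\ good Psi L s w.
  apply: NNPP => Hc.
  pose Bad r := ext_in (CP B0) r /\ ~ (exists w, size w = L /\ good Psi L r w).
  have pcB : prefix_closed Bad.
    move=> s t [H1 H2]; split; first exact: (ext_in_prefix (CP_pc tB0) H1).
    move=> [w [sw gw]]; apply: H2; exists w; split => //; exact: good_mono.
  have eB : ext_in Bad [::].
    move=> n; apply: NNPP => Hn; apply: Hc; exists n => s ss es.
    apply: NNPP => Hw; apply: Hn; exists s; split => //.
  have [T [HT _]] := konig pcB eB.
  have solT : wwkl_sol B0 T by move=> n; case: (HT n) => /ext_in_self.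
  have [X [HX _]] := Hsol0 T solT.
  have [N HN] := @combine (fun i N => forall Y, agree Y (join Afull T) N -> peval Y Psi [:: i] (X i)) L
    (fun i N M le HP Y HY => HP Y (agree_mono le HY))
    (fun i _ => peval_use (HX i)).
  case: (HT N) => _; apply; exists (mkseq X L); split; first exact: size_mkseq.
  move=> i lt Y HY; rewrite nth_mkseq //; apply: HN => // k lk.
  rewrite HY; last by rewrite size_mkseq; lia.
  have lk' : (k./2 < N)%N by rewrite ltn_half_double -mul2n; lia.
  by rewrite /join nth_mkseq.
pose vfun (s : seq bool) : seq bool :=
  match excluded_middle_informative (exists w, size w = L /\ good Psi L s w) with
  | left e => proj1_sig (constructive_indefinite_description _ e)
  | right _ => nseq L false end.
have size_vfun s : size (vfun s) = L.
  rewrite /vfun; destruct excluded_middle_informative as [e|] => //=; last by rewrite size_nseq.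
  by case: (constructive_indefinite_description _ e) => w [].
have good_vfun s : (exists w, size w = L /\ good Psi L s w) -> good Psi L s (vfun s).
  move=> ex; rewrite /vfun; destruct excluded_middle_informative as [e|] => //=.
  by case: (constructive_indefinite_description _ e) => w [].
have KU : (K <= size (strings L))%N by rewrite size_strings.
have [S [uS subS sS HS]] := @removal _ (fun x => count (fun s => vfun s == x) (strings m0))
   (strings L) K (uniq_strings L) KU.
rewrite sum_mass // sum_mass ?uniq_strings // size_strings in HS.
have : count (fun s => vfun s \in strings L) (strings m0) = (2 ^ m0)%N.
  by rewrite -size_strings -count_predT; apply: eq_count => s; rewrite mem_strings size_vfun eqxx.
move=> E; rewrite E in HS => {E}.
have [N HN] := stab (strings m0) tB0.
pose Cmax := (2 ^ (m0 + N).+1)%N.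
have [U0 HU0] := @combine (fun k U => forall Y, agree Y (oracle Afull) U -> peval Y Phi [:: k] (B0 k)) Cmax
    (fun i N M le HP Y HY => HP Y (agree_mono le HY))
    (fun k _ => peval_use (Hphi0 k)).
pose h := maxn (maxn L m0) U0.
have Lh : (L <= h)%N by rewrite /h; lia.
have m0h : (m0 <= h)%N by rewrite /h; lia.
have U0h : (U0 <= h)%N by rewrite /h; lia.
pose A' := Acut h L S.
have HA' : wwkl_inst p A'.
  split; first exact: Acut_tree.
  move=> n; rewrite Acut_level //; case: leqP => le.
  - rewrite divff; first exact: ltW (lt_trans pq q1).
    by rewrite pnatr_eq0 -lt0n expn_gt0.
  - rewrite ler_pdivlMr ?ltr0n ?expn_gt0 // sS.
    have -> : (2 ^ n)%N = (2 ^ L * 2 ^ (n - L))%N by rewrite -expnD subnKC //; lia.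
    rewrite !natrM mulrA ler_pM2r ?ltr0n ?expn_gt0 //; exact: ltW.
have [B' [Hphi' [HB' Hsol']]] := H A' HA'.
have tB' : is_tree B' by case: HB'.
have BB k : (k < Cmax)%N -> B' k = B0 k.
  move=> lk; apply: nb_inj; apply: (peval_det (Hphi' k)); apply: HU0 => // j lj.
  by rewrite /oracle /A' Acut_small //; lia.
have [N' HN'] := stab (strings m0) tB'.
have lb := count_lb m0 N' HB'.
have claim s : s \in strings m0 -> Dn B' s N' -> vfun s \in S.
  move=> sm HD; have e' := HN' s sm HD.
  have sz : size s = m0 by move: sm; rewrite mem_strings => /eqP.
  have e0 : ext_in (CP B0) s.
    apply: HN => //; have /DnP [t [st Ht]] := ext_Dn N e'.
    apply/DnP; exists t; split => //; rewrite -BB //.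
    by apply: leq_trans (scode_lt _) _; rewrite size_cat sz st.
  have gv := good_vfun s (Hm0 s sz e0).
  have [T [HT Ts]] := konig (CP_pc tB') e'.
  have [X [HX HXs]] := Hsol' T HT.
  have Xv i : (i < L)%N -> X i = nth false (vfun s) i.
    move=> lt; apply: nb_inj; apply: (peval_det (HX i)); apply: gv => //.
    rewrite sz; apply: join_agree => k lk.
    - by rewrite /A' Acut_small //; lia.
    - by rewrite Ts ?sz.
  have := HXs h.+1; rewrite /A' Acut_code size_mkseq ltnSn /= negbK take_mkseq //; last by lia.
  have -> // : mkseq X L = vfun s.
  apply: (@eq_from_nth _ false); rewrite size_mkseq ?size_vfun // => i lt.
  by rewrite nth_mkseq // Xv.
have cle : (count (fun s => Dn B' s N') (strings m0) <= count (fun s => vfun s \in S) (strings m0))%N.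
  by apply: count_sub_in => s; apply: claim.
move: lb HS cle Kq.
set c1 := count _ _; set c2 := count _ _ => lb HS cle Kq.
have h1 : q * (2 ^ m0)%:R <= c2%:R by apply: le_trans lb _; rewrite ler_nat.
have h2 : c2%:R * (2 ^ L)%:R <= K%:R * (2 ^ m0)%:R :> rat by rewrite -!natrM ler_nat.
have a0 : 0 < (2 ^ m0)%:R :> rat by rewrite ltr0n expn_gt0.
have b0 : 0 < (2 ^ L)%:R :> rat by rewrite ltr0n expn_gt0.
nra.
Qed.
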